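(* Let $m>6C^2(C+1)$ and $l_m=\lfloor\frac{m-2}{C+1}\rfloor$. Let $F_m(\mathbf x)=\sum_{i=1}^n a_iP_m(x_i)$ be a node of the escalator tree of $m$-gonal forms with $n\ge (C-4)l_m+5$ and $a_3=a_4=\cdots=a_{(C-4)l_m+5}=3$. (1) If $a_1+a_2+\cdots+a_n\ge 3(m-3)-1$ and $a_i\equiv0\pmod 3$ for all $3\le i\le n$, then $F_m(\mathbf x)$ is universal (hence a leaf). (2) If $a_n\not\equiv 0\pmod 3$, then $F_m(\mathbf x)$ is universal (hence a leaf).
   Context: For an integer $m\ge 3$ and $x\in\mathbb Z$ put $P_m(x)=\frac{m-2}{2}x^2-\frac{m-4}{2}x$. An $m$-gonal form of rank $n$ is $a_1P_m(x_1)+\cdots+a_nP_m(x_n)$ with positive integers $a_1\le\cdots\le a_n$ and $x_i\in\mathbb Z$; it represents $N$ if $N$ is a value at some integer vector, and is universal if it represents every positive integer. The truant of a non-universal form is the smallest positive integer it does not represent (the empty form has truant $1$). The escalator tree of $m$-gonal forms is the rooted tree whose root is the empty form; a universal node is a leaf, and a non-universal node $\sum_{i=1}^k a_iP_m(x_i)$ has as children exactly all forms $\sum_{i=1}^{k+1}a_iP_m(x_i)$ with $a_{k+1}\ge a_k$ (any $a_1\ge1$ if $k=0$) that represent the truant of the node. Standing assumption: $C$ is a fixed absolute constant such that for every $m\ge3$, every $m$-gonal form that represents every positive integer in $[1,C(m-2)]$ is universal. *)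

(* Defs.v *)
From mathcomp Require Import all_boot all_order all_algebra.
From mathcomp Require Import intdiv.
Set Implicit Arguments. Unset Strict Implicit. Unset Printing Implicit Defensive.
Import Order.TTheory GRing.Theory Num.Theory.
Local Open Scope ring_scope.

(* P_m(x) = ((m-2) x^2 - (m-4) x) / 2, an integer for every integer x. *)
Definition Pm (m : nat) (x : int) : int :=
  (((m%:Z - 2) * x ^+ 2 - (m%:Z - 4) * x) %/ 2)%Z.

(* An m-gonal form is given by its coefficient list a = [:: a_1; ...; a_n]
   (a_i = a`_(i-1)). *)
Definition value (m : nat) (a : seq nat) (x : nat -> int) : int :=
  \sum_(i < size a) (nth 0%N a i)%:Z * Pm m (x i).

Definition represents (m : nat) (a : seq nat) (N : nat) : Prop :=
  exists x : nat -> int, value m a x = N%:Z.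

Definition universal (m : nat) (a : seq nat) : Prop :=
  forall N : nat, (0 < N)%N -> represents m a N.

Definition is_form (a : seq nat) : Prop :=
  all (fun c => 0 < c)%N a /\ sorted leq a.

Definition is_truant (m : nat) (a : seq nat) (t : nat) : Prop :=
  [/\ (0 < t)%N, ~ represents m a t &
      forall k : nat, (0 < k < t)%N -> represents m a k].

Inductive escalator_node (m : nat) : seq nat -> Prop :=
| esc_root : escalator_node m [::]
| esc_child : forall (a : seq nat) (b t : nat),
    escalator_node m a ->
    ~ universal m a ->
    is_truant m a t ->
    (if a is [::] then (1 <= b)%N else (last 0%N a <= b)%N) ->
    represents m (rcons a b) t ->
    escalator_node m (rcons a b).

(* Main.v *)
Require Import Defs.
From mathcomp Require Import all_boot all_order all_algebra intdiv.
From mathcomp Require Import zify ring lra.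
Import Order.TTheory GRing.Theory Num.Theory.
Local Open Scope ring_scope.

Lemma Pm2 m x : Pm m x * 2 = (m%:Z - 2) * x ^+ 2 - (m%:Z - 4) * x.
Proof.
rewrite /Pm.
have := divz_eq x 2; set y := (x %/ 2)%Z; set r := (x %% 2)%Z => hx.
have hr : r = 0 \/ r = 1.
  have h1 : 0 <= r by apply: modz_ge0.
  have h2 : r < 2 by rewrite /r ltz_pmod.
  lia.
case: hr => hr; rewrite hx hr.
- rewrite [X in (X %/ 2)%Z](_ : _ = ((m%:Z - 2) * (2 * y^+2) - (m%:Z - 4) * y) * 2); last by ring.
  rewrite mulzK //. ring.
- rewrite [X in (X %/ 2)%Z](_ : _ = ((m%:Z - 2) * (2 * y^+2 + 2 * y) - (m%:Z - 4) * y + 1) * 2); last by ring.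
  rewrite mulzK //. ring.
Qed.

Lemma Pm2' m x : Pm m x * 2 = (m%:Z - 2) * (x * x) - (m%:Z - 4) * x.
Proof. by rewrite Pm2 expr2. Qed.

Lemma Pm_ge0 m x : (4 <= m)%N -> 0 <= Pm m x.
Proof.
move=> hm; have := Pm2' m x.
have hm' : 4 <= m%:Z by lia.
set p := Pm m x => h.
have [hx|hx] : x <= 0 \/ 1 <= x by lia.
- have : 0 <= x * ((m%:Z - 2) * x - (m%:Z - 4)).
    apply: mulr_le0 => //; nia.
  nia.
- have : 0 <= x * ((m%:Z - 2) * (x - 1)).
    apply: mulr_ge0; first lia. apply: mulr_ge0; lia.
  nia.
Qed.

Lemma Pm_big m x : (4 <= m)%N -> (x <= -1 \/ 2 <= x) -> m%:Z - 3 <= Pm m x.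
Proof.
move=> hm hx; have := Pm2' m x.
have hm' : 4 <= m%:Z by lia.
set p := Pm m x => h.
case: hx => hx.
- have : 0 <= (- x - 1) * ((m%:Z - 2) * (- x) + (m%:Z - 4) + (m%:Z - 2)).
    apply: mulr_ge0; first lia. nia.
  nia.
- have : 0 <= (x - 2) * ((m%:Z - 2) * x + (m%:Z - 2) * 2 - (m%:Z - 4)).
    apply: mulr_ge0; first lia. nia.
  nia.
Qed.

Lemma Pm_0 m : Pm m 0 = 0.
Proof. have := Pm2' m 0. lia. Qed.
Lemma Pm_1 m : Pm m 1 = 1.
Proof. have := Pm2' m 1. lia. Qed.
Lemma Pm_N1 m : Pm m (-1) = m%:Z - 3.
Proof. have := Pm2' m (-1). lia. Qed.
Lemma Pm_2 m : Pm m 2 = m%:Z.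
Proof. have := Pm2' m 2. lia. Qed.

Lemma Pm_small m x : (4 <= m)%N -> Pm m x < m%:Z - 3 -> Pm m x <= 1.
Proof.
move=> hm hp.
have [h|h] : (x <= -1 \/ 2 <= x) \/ (x = 0 \/ x = 1) by lia.
- have := Pm_big _ _ hm h; lia.
- case: h => ->; rewrite ?Pm_0 ?Pm_1 //.
Qed.

Lemma value_ge0 m a x : (4 <= m)%N -> 0 <= value m a x.
Proof.
move=> hm; rewrite /value; apply: sumr_ge0 => i _.
apply: mulr_ge0 => //; exact: Pm_ge0.
Qed.

Lemma value_ext m a x y : (forall i, (i < size a)%N -> x i = y i) ->
  value m a x = value m a y.
Proof. by move=> h; rewrite /value; apply: eq_bigr => i _; rewrite h. Qed.

Lemma value_rcons m a b x :
  value m (rcons a b) x = value m a x + b%:Z * Pm m (x (size a)).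
Proof.
rewrite /value size_rcons big_ord_recr /= nth_rcons ltnn eqxx; congr (_ + _).
by apply: eq_bigr => i _; rewrite nth_rcons ltn_ord.
Qed.

Lemma rep0 m a : represents m a 0.
Proof.
exists (fun _ => 0); rewrite /value big1 // => i _; by rewrite Pm_0 mulr0.
Qed.

Lemma rep_rcons0 m a b N : represents m a N -> represents m (rcons a b) N.
Proof.
case=> x hx; exists (fun i => if i == size a then 0 else x i).
rewrite value_rcons eqxx Pm_0 mulr0 addr0 -hx; apply: value_ext => i hi.
by rewrite (ltn_eqF hi).
Qed.

Lemma rep_rcons1 m a b N : represents m a N -> represents m (rcons a b) (N + b).
Proof.
case=> x hx; exists (fun i => if i == size a then 1 else x i).
rewrite value_rcons eqxx Pm_1 mulr1 PoszD -hx; congr (_ + _); apply: value_ext => i hi.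
by rewrite (ltn_eqF hi).
Qed.

Lemma b_le_t m a b t : (4 <= m)%N -> ~ represents m a t ->
  represents m (rcons a b) t -> (b <= t)%N.
Proof.
move=> hm hn [x hx]; move: hx; rewrite value_rcons => hx.
have h0 := value_ge0 m a x hm.
have h1 := Pm_ge0 m (x (size a)) hm.
have [hp|hp] : Pm m (x (size a)) = 0 \/ 1 <= Pm m (x (size a)) by lia.
- by case: hn; exists x; rewrite -hx hp mulr0 addr0.
- have : b%:Z <= b%:Z * Pm m (x (size a)) by nia.
  lia.
Qed.

Lemma node_form m a : escalator_node m a -> is_form a.
Proof.
move=> h; elim: h => {a} [|a b t hnode [hpos hsort] _ _ hle _]; first by [].
split.
- rewrite all_rcons hpos andbT; case: a hnode hpos hsort hle => [|c a] _ hpos _ hle; first exact: hle.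
  have := allP hpos _ (mem_last c a); move=> h0; exact: leq_trans h0 hle.
- case: a hnode hpos hsort hle => [|c a] //= _ _ hsort hle.
  by rewrite rcons_path hsort.
Qed.

Lemma node_sum m a : (4 <= m)%N -> escalator_node m a ->
  forall N, (N <= \sum_(i <- a) i)%N -> represents m a N.
Proof.
move=> hm h; elim: h => {a} [|a b t hnode IH hnu [ht0 htn htr] hle hrep].
- by rewrite big_nil => N; rewrite leqn0 => /eqP ->; exact: rep0.
- have hb := b_le_t m a b t hm htn hrep.
  move=> N; rewrite big_rcons /= => hN.
  have [h1|h1] := leqP N (\sum_(i <- a) i).
    by apply: rep_rcons0; apply: IH.
  have [h2|h2] := leqP b N.
    have -> : N = (N - b + b)%N by rewrite subnK.
    apply: rep_rcons1; apply: IH; lia.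
  apply: rep_rcons0; apply: htr; apply/andP; split; lia.
Qed.

Lemma truant_unique m a t t0 : is_truant m a t -> (0 < t0)%N -> ~ represents m a t0 ->
  (forall k, (0 < k < t0)%N -> represents m a k) -> t = t0.
Proof.
case=> ht0 htn htr h0 hn hr.
have [h|h|h] := ltngtP t t0.
- by case: htn; apply: hr; rewrite ht0 h.
- by case: hn; apply: htr; rewrite h0 h.
- by apply/eqP; rewrite h.
Qed.

Lemma value_nil m x : value m [::] x = 0.
Proof. by rewrite /value big_ord0. Qed.

Lemma value_1 m c x : value m [:: c] x = c%:Z * Pm m (x 0%N).
Proof. by rewrite /value big_ord_recr big_ord0 /= add0r. Qed.

Lemma truant_nil m t : is_truant m [::] t -> t = 1%N.
Proof.
move=> h; apply: (truant_unique _ _ _ _ h) => //.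
- by case=> x; rewrite value_nil.
- by move=> k /andP[h1 h2]; lia.
Qed.

Lemma truant_one m t : (7 <= m)%N -> is_truant m [:: 1%N] t -> t = 2%N.
Proof.
move=> hm h; apply: (truant_unique _ _ _ _ h) => //.
- case=> x; rewrite value_1 mul1r => hx.
  have h4 : (4 <= m)%N by lia.
  have := Pm_small m (x 0%N) h4; rewrite hx; lia.
- move=> k /andP[h1 h2]; have -> : k = 1%N by lia.
  by exists (fun _ => 1); rewrite value_1 Pm_1.
Qed.

Lemma node_head m a : (7 <= m)%N -> escalator_node m a ->
  ((0 < size a)%N -> nth 0%N a 0 = 1%N) /\ ((1 < size a)%N -> (nth 0%N a 1 <= 2)%N).
Proof.
move=> hm h; have h4 : (4 <= m)%N by lia.
elim: h => {a} [|a b t hnode [IH1 IH2] hnu ht hle hrep]; first by [].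
have hb := b_le_t m a b t h4 (let: And3 _ x _ := ht in x) hrep.
split.
- case: a hnode IH1 IH2 hnu ht hle hrep hb => [|c a] hnode IH1 IH2 hnu ht hle hrep hb _.
  + have := truant_nil _ _ ht => ?; subst t; rewrite /=; lia.
  + by rewrite nth_rcons /=; apply: IH1.
- case: a hnode IH1 IH2 hnu ht hle hrep hb => [|c [|d a]] hnode IH1 IH2 hnu ht hle hrep hb; rewrite ?size_rcons //= => _.
  have hc : c = 1%N by exact: IH1.
  subst c; by have := truant_one _ _ hm ht => ?; subst t.
Qed.

Definition pat (q e' : nat) (y0 : int) (j : nat) : int :=
  if (j < q)%N then y0 else if (j < q + e')%N then 1 else 0.

Lemma sum_const_int (lo hi : nat) (c : int) : (lo <= hi)%N ->
  \sum_(lo <= j < hi) c = (hi - lo)%N%:Z * c.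
Proof. by move=> _; rewrite sumr_const_nat -mulr_natl natz. Qed.

Lemma sum_pat m q e' y0 D : (q + e' <= D)%N ->
  \sum_(0 <= j < D) Pm m (pat q e' y0 j) = q%:Z * Pm m y0 + e'%:Z.
Proof.
move=> hD.
rewrite (@big_cat_nat _ _ _ q) //; last by lia.
rewrite (@big_cat_nat _ _ _ (q + e')%N q D) /=; [|lia|lia].
rewrite (eq_big_nat _ _ (F2 := fun _ => Pm m y0)); last first.
  by move=> i /andP[_ hi]; rewrite /pat hi.
rewrite [X in _ + (X + _)](eq_big_nat _ _ (F2 := fun _ => 1)); last first.
  by move=> i /andP[h1 h2]; rewrite /pat h2 ltnNge h1 /= Pm_1.
rewrite [X in _ + (_ + X)](eq_big_nat _ _ (F2 := fun _ => 0)); last first.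
  move=> i /andP[h1 h2]; rewrite /pat.
  have -> : (i < q)%N = false by lia.
  have -> : (i < q + e')%N = false by lia.
  by rewrite Pm_0.
rewrite !sum_const_int; [|lia|lia|lia].
by rewrite subn0 mulr0 addr0 mulr1 addKn.
Qed.

Lemma value_split m a x k : (2 <= k <= size a)%N ->
  value m a x = (nth 0%N a 0)%:Z * Pm m (x 0%N) + (nth 0%N a 1)%:Z * Pm m (x 1%N)
   + \sum_(2 <= i < k) (nth 0%N a i)%:Z * Pm m (x i)
   + \sum_(k <= i < size a) (nth 0%N a i)%:Z * Pm m (x i).
Proof.
move=> /andP[h2 hk].
rewrite /value -(big_mkord xpredT (fun i => (nth 0%N a i)%:Z * Pm m (x i))).
rewrite (@big_cat_nat _ _ _ k 0 (size a)) //.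
rewrite (@big_cat_nat _ _ _ 2) //.
rewrite big_ltn // big_ltn // big_geq // /=; by rewrite addr0.
Qed.

Lemma value_blk m a x k : (2 <= k <= size a)%N ->
  (forall i, (2 <= i < k)%N -> nth 0%N a i = 3%N) ->
  value m a x = (nth 0%N a 0)%:Z * Pm m (x 0%N) + (nth 0%N a 1)%:Z * Pm m (x 1%N)
   + 3 * \sum_(2 <= i < k) Pm m (x i)
   + \sum_(k <= i < size a) (nth 0%N a i)%:Z * Pm m (x i).
Proof.
move=> hk hb; rewrite (value_split m a x k hk) mulr_sumr; congr (_ + _ + _).
by apply: eq_big_nat => i hi; rewrite hb.
Qed.

Definition mkx (k q e' : nat) (y0 x1 x2 : int) (rest : nat -> int) (i : nat) : int :=
  if i == 0%N then x1 else if i == 1%N then x2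
  else if (i < k)%N then pat q e' y0 (i - 2) else rest i.

Lemma value_mkx m a k q e' y0 x1 x2 rest : (2 <= k <= size a)%N ->
  (forall i, (2 <= i < k)%N -> nth 0%N a i = 3%N) -> (q + e' <= k - 2)%N ->
  value m a (mkx k q e' y0 x1 x2 rest) =
   (nth 0%N a 0)%:Z * Pm m x1 + (nth 0%N a 1)%:Z * Pm m x2
   + 3 * (q%:Z * Pm m y0 + e'%:Z)
   + \sum_(k <= i < size a) (nth 0%N a i)%:Z * Pm m (rest i).
Proof.
move=> hk hb hq; rewrite (value_blk m a _ k hk hb).
congr (_ + _ + _ + _).
- congr (_ * _).
  rewrite (eq_big_nat _ _ (F2 := fun i => Pm m (pat q e' y0 (i - 2)))); last first.
    move=> i /andP[h1 h2]; rewrite /mkx h2.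
    have -> : (i == 0%N) = false by lia.
    by have -> : (i == 1%N) = false by lia.
  have -> : (2 = 0 + 2)%N by [].
  rewrite big_addn.
  rewrite (eq_big_nat _ _ (F2 := fun j => Pm m (pat q e' y0 j))); last first.
    by move=> i _; rewrite addnK.
  exact: sum_pat.
- apply: eq_big_nat => i /andP[h1 h2]; rewrite /mkx.
  have -> : (i == 0%N) = false by lia.
  have -> : (i == 1%N) = false by lia.
  by have -> : (i < k)%N = false by lia.
Qed.

Lemma term_le_sum (F : nat -> int) lo hi i : (lo <= i < hi)%N ->
  (forall j, 0 <= F j) -> F i <= \sum_(lo <= j < hi) F j.
Proof.
move=> hi' h0.
rewrite (bigD1_seq i) ?iota_uniq ?mem_index_iota //=.
by rewrite lerDl; apply: sumr_ge0 => j _; apply: h0.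
Qed.

Lemma shift_rep m a k C : (7 <= m)%N -> (2 <= k <= size a)%N ->
  (forall i, (2 <= i < k)%N -> nth 0%N a i = 3%N) -> (4 * C <= k - 2)%N ->
  (forall v, (v < 3 * (m - 3))%N -> represents m a v) ->
  forall N, (N <= C * (m - 2))%N -> represents m a N.
Proof.
move=> hm hk hb hD hsmall N hN.
have h4 : (4 <= m)%N by lia.
set d := (3 * (m - 3))%N.
have hd : (0 < d)%N by rewrite /d; lia.
set q := (N %/ d)%N; set v := (N %% d)%N.
have hNqv : N = (q * d + v)%N by rewrite /q /v -divn_eq.
have hv : (v < d)%N by rewrite /v ltn_pmod.
have hq : (q <= C)%N.
  have h1 : (q * d <= C * d)%N.
    apply: leq_trans (leq_trunc_div N d) _; apply: leq_trans hN _; rewrite /d; nia.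
  by rewrite leq_pmul2r in h1.
have [x hx] := hsmall v hv.
have hval := value_blk m a x k hk hb.
set S := \sum_(2 <= i < k) Pm m (x i).
have hA0 : 0 <= (nth 0%N a 0)%:Z * Pm m (x 0%N) by apply: mulr_ge0 => //; exact: Pm_ge0.
have hA1 : 0 <= (nth 0%N a 1)%:Z * Pm m (x 1%N) by apply: mulr_ge0 => //; exact: Pm_ge0.
have hB : 0 <= \sum_(k <= i < size a) (nth 0%N a i)%:Z * Pm m (x i).
  by apply: sumr_ge0 => i _; apply: mulr_ge0 => //; exact: Pm_ge0.
have hS3 : 3 * S <= v%:Z by rewrite -hx hval -/S; lia.
have hterm : forall i, (2 <= i < k)%N -> Pm m (x i) <= 1.
  move=> i hi; apply: Pm_small => //.
  have := term_le_sum (fun j => Pm m (x j)) 2 k i hi (fun j => Pm_ge0 m (x j) h4).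
  rewrite -/S => h; move: hv; rewrite /d => hv'; lia.
have hS0 : 0 <= S by apply: sumr_ge0 => i _; exact: Pm_ge0.
have hSD : S <= (k - 2)%N%:Z.
  apply: (@le_trans _ _ (\sum_(2 <= i < k) (1:int))).
  - by apply: ler_sum_nat => i hi; apply: hterm.
  - rewrite sum_const_int ?mulr1 //; lia.
set e := `|S|%N.
have hSe : S = e%:Z by rewrite /e gez0_abs.
have [hcase|hcase] := leqP (q + e) (k - 2).
- exists (mkx k q e (-1) (x 0%N) (x 1%N) x).
  rewrite (value_mkx m a k q e (-1) (x 0%N) (x 1%N) x hk hb hcase) Pm_N1.
  move: hx; rewrite hval -/S hSe hNqv /d => hx.
  lia.
- have h3q : (3 * q <= e)%N by lia.
  have hc2 : (q + (e - 3 * q) <= k - 2)%N by lia.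
  exists (mkx k q (e - 3 * q) 2 (x 0%N) (x 1%N) x).
  rewrite (value_mkx m a k q (e - 3 * q) 2 (x 0%N) (x 1%N) x hk hb hc2) Pm_2.
  move: hx; rewrite hval -/S hSe hNqv /d => hx.
  lia.
Qed.

Lemma rep_r m a k a2 x1 x2 r e : (2 <= k <= size a)%N ->
  (forall i, (2 <= i < k)%N -> nth 0%N a i = 3%N) ->
  nth 0%N a 0 = 1%N -> nth 0%N a 1 = a2 ->
  r%:Z = Pm m x1 + a2%:Z * Pm m x2 -> (e <= k - 2)%N ->
  represents m a (r + 3 * e).
Proof.
move=> hk hb h0 h1 hr he.
exists (mkx k 0 e 0 x1 x2 (fun _ => 0)).
rewrite (value_mkx m a k 0 e 0 x1 x2 (fun _ => 0) hk hb he) h0 h1.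
rewrite big1; last by move=> i _; rewrite Pm_0 mulr0.
rewrite mul0r add0r addr0 mul1r -hr; lia.
Qed.

Lemma rep_big m a k a2 v r x1 x2 : (2 <= k <= size a)%N ->
  (forall i, (2 <= i < k)%N -> nth 0%N a i = 3%N) ->
  nth 0%N a 0 = 1%N -> nth 0%N a 1 = a2 ->
  r%:Z = Pm m x1 + a2%:Z * Pm m x2 -> (r <= v)%N -> ((v - r) %% 3 = 0)%N ->
  (v - r <= 3 * (k - 2))%N -> represents m a v.
Proof.
move=> hk hb h0 h1 hr h2 h3 h4.
have -> : v = (r + 3 * ((v - r) %/ 3))%N by lia.
apply: (rep_r m a k a2 x1 x2) => //; lia.
Qed.

Ltac try_r m a k a2 v hk hb h0 h1 r x1 x2 :=
  apply: (rep_big m a k a2 v r x1 x2 hk hb h0 h1);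
  [rewrite ?Pm_N1 ?Pm_0 ?Pm_1; nia | lia | lia | lia].

Lemma cover m a k a2 v : (7 <= m)%N -> (2 <= k <= size a)%N ->
  (forall i, (2 <= i < k)%N -> nth 0%N a i = 3%N) ->
  nth 0%N a 0 = 1%N -> nth 0%N a 1 = a2 -> (1 <= a2 <= 2)%N ->
  (2 * m + 10 <= 3 * (k - 2))%N -> (v <= 3 * m - 10)%N ->
  ((v <= 3 * (k - 2))%N \/
   ~ (a2 = 1 /\ m %% 3 <> 2 /\ v %% 3 = (m + 2) %% 3 \/ a2 = 2 /\ m %% 3 = 2 /\ v %% 3 = 0))%N ->
  represents m a v.
Proof.
move=> hm hk hb h0 h1 ha2 hD hv hc.
have [hs|hs] := leqP v (3 * (k - 2)).
- have hv' : v = (v %% 3 + 3 * (v %/ 3))%N by lia.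
  have he : (v %/ 3 <= k - 2)%N by lia.
  have [r0|[r1|r2]] : (v %% 3 = 0 \/ v %% 3 = 1 \/ v %% 3 = 2)%N by lia.
  + rewrite hv' r0; apply: (rep_r m a k a2 0 0) => //; rewrite Pm_0; lia.
  + rewrite hv' r1; apply: (rep_r m a k a2 1 0) => //; rewrite Pm_0 Pm_1; lia.
  + rewrite hv' r2.
    have [e1|e2] : a2 = 1%N \/ a2 = 2%N by lia.
    * apply: (rep_r m a k a2 1 1) => //; rewrite Pm_1 e1; lia.
    * apply: (rep_r m a k a2 0 1) => //; rewrite Pm_0 Pm_1 e2; lia.
- have hm3 : (m %% 3 = 0 \/ m %% 3 = 1 \/ m %% 3 = 2)%N by lia.
  have hv3 : (v %% 3 = 0 \/ v %% 3 = 1 \/ v %% 3 = 2)%N by lia.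
  have [e1|e2] : a2 = 1%N \/ a2 = 2%N by lia.
  all: case: hm3 => [m0|[m0|m0]]; case: hv3 => [v0|[v0|v0]].
  1-9: first [ try_r m a k a2 v hk hb h0 h1 (m - 3)%N (-1 : int) (0:int)
          | try_r m a k a2 v hk hb h0 h1 (m - 2)%N (-1 : int) (1:int)
          | try_r m a k a2 v hk hb h0 h1 (2 * m - 6)%N (-1 : int) (-1 : int)
          | exfalso; lia ].
  all: first [ try_r m a k a2 v hk hb h0 h1 (m - 3)%N (-1 : int) (0:int)
          | try_r m a k a2 v hk hb h0 h1 (m - 1)%N (-1 : int) (1:int)
          | try_r m a k a2 v hk hb h0 h1 (2 * m - 6)%N (0:int) (-1 : int)
          | try_r m a k a2 v hk hb h0 h1 (2 * m - 5)%N (1:int) (-1 : int)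
          | exfalso; lia ].
Qed.

Definition L5 : seq (nat * int) :=
  [:: (0%N, 0); (1%N, 1); (2%N, -1); (5%N, 2); (7%N, -2); (12%N, 3); (15%N, -3);
      (22%N, 4); (26%N, -4); (35%N, 5); (40%N, -5)].

Lemma L5_ok : all (fun p => Pm 5 p.2 == p.1%:Z) L5.
Proof. by vm_compute. Qed.

Lemma L5_val p : p \in L5 -> Pm 5 p.2 = p.1%:Z.
Proof. by move=> h; apply/eqP; exact: (allP L5_ok p h). Qed.

Lemma int_range5 (x : int) : -5 <= x <= 5 -> has (fun p => x == p.2) L5.
Proof.
case: x => n.
- move=> /andP[_ h]; have : (n <= 5)%N by lia.
  by case: n h => [|[|[|[|[|[|n]]]]]] //.
- move=> /andP[h _]; have : (n <= 4)%N by move: h; rewrite NegzE; lia.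
  by case: n h => [|[|[|[|[|n]]]]] //.
Qed.

Lemma pent_small x : Pm 5 x <= 43 -> exists2 p, p \in L5 & Pm 5 x = p.1%:Z.
Proof.
move=> h; have := Pm2' 5 x => h2.
have hx : -5 <= x <= 5.
  have h3 : Pm 5 x * 2 = 3 * (x * x) - x by rewrite h2; ring.
  apply/andP; split; nia.
have /hasP[p hp /eqP ->] := int_range5 x hx.
by exists p => //; exact: L5_val.
Qed.

Lemma value_3 m c1 c2 c3 x : value m [:: c1; c2; c3] x =
  c1%:Z * Pm m (x 0%N) + c2%:Z * Pm m (x 1%N) + c3%:Z * Pm m (x 2%N).
Proof. by rewrite /value !big_ord_recr big_ord0 /= add0r. Qed.

Definition chk5 (N : nat) := has (fun p1 => has (fun p2 => has (fun p3 =>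
  (p1.1 + p2.1 + 11 * p3.1 == N)%N) L5) L5) L5.

Lemma chk5_all : all chk5 (iota 1 42).
Proof. by vm_compute. Qed.

Lemma no43 : all (fun p1 => all (fun p2 => all (fun p3 =>
  (p1.1 + p2.1 + 11 * p3.1 != 43)%N) L5) L5) L5.
Proof. by vm_compute. Qed.

Lemma pent_rep N : (1 <= N <= 42)%N -> represents 5 [:: 1%N; 1%N; 11%N] N.
Proof.
move=> hN.
have hmem : N \in iota 1 42 by rewrite mem_iota; lia.
have := allP chk5_all N hmem.
move=> /hasP[p1 h1 /hasP[p2 h2 /hasP[p3 h3 /eqP hs]]].
exists (fun i => if i == 0%N then p1.2 else if i == 1%N then p2.2 else p3.2).
rewrite value_3 /= !L5_val // -hs; move: (p1.1) (p2.1) (p3.1) => n1 n2 n3; lia.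
Qed.

Lemma pent_no43 : ~ represents 5 [:: 1%N; 1%N; 11%N] 43.
Proof.
case=> x; rewrite value_3 => hx.
have g0 := Pm_ge0 5 (x 0%N) isT.
have g1 := Pm_ge0 5 (x 1%N) isT.
have g2 := Pm_ge0 5 (x 2%N) isT.
have [p1 h1 e1] := pent_small (x 0%N) ltac:(lia).
have [p2 h2 e2] := pent_small (x 1%N) ltac:(lia).
have [p3 h3 e3] := pent_small (x 2%N) ltac:(lia).
have := allP (allP (allP no43 p1 h1) p2 h2) p3 h3.
move: hx; rewrite e1 e2 e3; move: (p1.1) (p2.1) (p3.1) => n1 n2 n3 hx /eqP; apply; lia.
Qed.

Lemma HC_small (C : nat)
  (HC : forall m : nat, (3 <= m)%N -> forall a : seq nat, is_form a ->
          (forall N : nat, (1 <= N <= C * (m - 2))%N -> represents m a N) ->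
          universal m a) : (15 <= C)%N.
Proof.
rewrite leqNgt; apply/negP => hC.
have hu := HC 5 isT [:: 1%N; 1%N; 11%N] (conj isT isT).
apply: pent_no43; apply: hu; last by [].
move=> N hN; apply: pent_rep; lia.
Qed.

Lemma node_inv m s a' b : escalator_node m s -> s = rcons a' b ->
  [/\ escalator_node m a', ~ universal m a' &
      exists t, is_truant m a' t /\ represents m (rcons a' b) t].
Proof.
case=> [|a0 b0 t hn hnu ht _ hr]; first by case: a'.
by move=> /rcons_inj [<- <-]; split => //; exists t.
Qed.

Lemma universal_of m a k C
  (HC : forall m : nat, (3 <= m)%N -> forall a : seq nat, is_form a ->
          (forall N : nat, (1 <= N <= C * (m - 2))%N -> represents m a N) ->
          universal m a) :
  (7 <= m)%N -> (2 <= k <= size a)%N ->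
  (forall i, (2 <= i < k)%N -> nth 0%N a i = 3%N) -> (4 * C <= k - 2)%N ->
  is_form a -> (forall v, (v < 3 * (m - 3))%N -> represents m a v) -> universal m a.
Proof.
move=> hm hk hb hD hf hs; apply: HC => //; first lia.
move=> N /andP[_ hN]; exact: (shift_rep m a k C hm hk hb hD hs).
Qed.

Theorem lemma4p17 (C : nat)
  (HC : forall m : nat, (3 <= m)%N -> forall a : seq nat, is_form a ->
          (forall N : nat, (1 <= N <= C * (m - 2))%N -> represents m a N) ->
          universal m a)
  (m : nat) (Hm : (6 * C ^ 2 * (C + 1) < m)%N)
  (a : seq nat) (Hnode : escalator_node m a)
  (Hn : (C%:Z - 4) * ((m - 2) %/ (C + 1))%N%:Z + 5 <= (size a)%:Z)
  (H3 : forall i : nat, (3 <= i)%N ->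
          i%:Z <= (C%:Z - 4) * ((m - 2) %/ (C + 1))%N%:Z + 5 ->
          nth 0%N a i.-1 = 3%N) :
  ((3 * (m - 3) - 1 <= \sum_(i <- a) i)%N ->
   (forall i : nat, (3 <= i <= size a)%N -> (3 %| nth 0%N a i.-1)%N) ->
   universal m a)
  /\
  (~~ (3 %| nth 0%N a (size a).-1)%N -> universal m a).
Proof.
have hC := HC_small C HC.
move: Hn H3; set l := ((m - 2) %/ (C + 1))%N => Hn H3.
set k := ((C - 4) * l + 5)%N.
have hkZ : (C%:Z - 4) * l%:Z + 5 = k%:Z.
  rewrite /k PoszD PoszM; congr (_ * _ + _); lia.
rewrite hkZ in Hn H3.
have hk5 : (5 <= k)%N by rewrite /k leq_addl.
have hks : (k <= size a)%N by lia.
have hl1 : (l * (C + 1) <= m - 2)%N by rewrite /l leq_trunc_div.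
have hl2 : (m - 2 < (l + 1) * (C + 1))%N.
  have e1 := divn_eq (m - 2) (C + 1).
  have e2 : ((m - 2) %% (C + 1) < C + 1)%N by rewrite ltn_pmod // addn1.
  rewrite -/l in e1; move: e1 e2; set r := ((m - 2) %% (C + 1))%N => e1 e2; nia.
have hm7 : (7 <= m)%N by nia.
have hl : (2 * C + 5 <= l)%N.
  rewrite leqNgt; apply/negP => hlt.
  have h1 : ((l + 1) * (C + 1) <= (2 * C + 5) * (C + 1))%N by apply: leq_mul; lia.
  have h2 : ((2 * C + 5) * (C + 1) + 2 <= 6 * C ^ 2 * (C + 1))%N.
    rewrite expnS expn1; nia.
  lia.
have hD1 : (2 * m + 10 <= 3 * (k - 2))%N.
  have h1 : ((2 * C + 5) * 11 <= l * (C - 14) + l * 11)%N by nia.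
  rewrite /k; nia.
have hD2 : (4 * C <= k - 2)%N by rewrite /k; nia.
have hk2 : (2 <= k <= size a)%N by rewrite hks andbT /k; lia.
have hb : forall i, (2 <= i < k)%N -> nth 0%N a i = 3%N.
  move=> i hi; have := H3 i.+1; rewrite /=; apply; lia.
have hform := node_form m a Hnode.
split.
- move=> hsum _; apply: (universal_of m a k C HC hm7 hk2 hb hD2 hform) => v hv.
  apply: (node_sum m a _ Hnode); lia.
- move=> hndiv.
  have [a' [b ea]] : exists a' b, a = rcons a' b.
    case/lastP: a hks Hnode hndiv {Hn H3 hk2 hb hform} => [|a' b] hks _ _.
    + by move: hks; rewrite /k /= addnS.
    + by exists a', b.
  move: Hnode hndiv hks hb hform; rewrite ea => Hnode hndiv hks hb hform.
  have [hn' hnu [t [ht hrep]]] := node_inv m _ a' b Hnode erefl.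
  move: hndiv; rewrite size_rcons /= nth_rcons ltnn eqxx => hndiv.
  have hb3 : (b %% 3 <> 0)%N by move: hndiv; rewrite /dvdn; case: (b %% 3)%N.
  rewrite size_rcons in hks.
  have hka : (k <= size a')%N.
    rewrite leqNgt; apply/negP => hlt.
    have := hb (size a'); rewrite nth_rcons ltnn eqxx => h.
    by apply: hb3; rewrite h //; lia.
  have hk2' : (2 <= k <= size a')%N by rewrite hka andbT /k; lia.
  have hb' : forall i, (2 <= i < k)%N -> nth 0%N a' i = 3%N.
    move=> i hi; have := hb i hi; rewrite nth_rcons.
    by have -> : (i < size a')%N by lia.
  have [hh0 hh1] := node_head m _ hm7 hn'.
  have h0' : nth 0%N a' 0 = 1%N by apply: hh0; lia.
  set a2 := nth 0%N a' 1.
  have ha2 : (1 <= a2 <= 2)%N.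
    rewrite hh1; last by lia.
    have [hpos _] := node_form m a' hn'.
    have hsz : (1 < size a')%N by lia.
    rewrite andbT; apply: (allP hpos); apply: mem_nth; exact: hsz.
  have h4 : (4 <= m)%N by lia.
  have hbt := b_le_t m a' b t h4 (let: And3 _ x _ := ht in x) hrep.
  apply: (universal_of m _ k C HC hm7 _ hb hD2 hform).
    by rewrite size_rcons; lia.
  move=> v hv.
  have hcov := fun w hw hc => cover m a' k a2 w hm7 hk2' hb' h0' erefl ha2 hD1 hw hc.
  have [hmiss|hmiss] := boolP [&& (3 * (k - 2) < v)%N ,
      ((a2 == 1%N) && (m %% 3 != 2)%N && (v %% 3 == (m + 2) %% 3)%N) ||
      ((a2 == 2%N) && (m %% 3 == 2)%N && (v %% 3 == 0)%N) & true].
  + have [hvt|hvt] := ltnP v t.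
    * apply: rep_rcons0; case: v hv hmiss hvt => [|v] hv hmiss hvt; first exact: rep0.
      by case: ht => _ _; apply; lia.
    * have -> : v = (v - b + b)%N by lia.
      apply: rep_rcons1; apply: hcov; first lia.
      right; move: hmiss => /and3P[_ /orP[/andP[/andP[/eqP e1 /eqP e2] /eqP e3]|/andP[/andP[/eqP e1 /eqP e2] /eqP e3]] _]; lia.
  + apply: rep_rcons0; apply: hcov; first lia.
    move: hmiss; rewrite andbT negb_and negb_or -!leqNgt => /orP[h|h]; first by left.
    right; move: h => /andP[h1 h2]; move: h1 h2.
    by rewrite !negb_and => /orP[/orP[/eqP ?|/eqP ?]|/eqP ?] /orP[/orP[/eqP ?|/negPn /eqP ?]|/eqP ?]; lia.
Qed.
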